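(* Let $\mathcal{F}$ be a frame, let $C_s, C_{cut}, C_o \subseteq \mathcal{CH}$ be sets of channels such that $C_{cut}$ is an undirected cut between $C_s$ and $C_o$, and let $f$ be a function on sets of $C_s$-runs. If $\mathcal{F}$ $f$-limits $C_s$-to-$C_{cut}$ flow, then $\mathcal{F}$ $f$-limits $C_s$-to-$C_o$ flow.
   Context: A frame $\mathcal{F}$ consists of pairwise disjoint sets $\mathcal{LO}$ (locations), $\mathcal{CH}$ (channels) and $\mathcal{D}$ (data values). Each channel $c$ either has both a sender location $\mathrm{sender}(c)\in\mathcal{LO}$ and a recipient location $\mathrm{recipient}(c)\in\mathcal{LO}$ (possibly equal), or has neither. For $\ell\in\mathcal{LO}$ let $\mathrm{chans}(\ell)=\{c:\mathrm{sender}(c)=\ell \text{ or } \mathrm{recipient}(c)=\ell\}$. Each location $\ell$ carries a prefix-closed set $\mathrm{traces}(\ell)$ of finite or infinite sequences of labels $(c,v)$ with $c\in\mathrm{chans}(\ell)$, $v\in\mathcal{D}$. Fix a set $E$ of events with functions $\mathrm{chan}:E\to\mathcal{CH}$, $\mathrm{msg}:E\to\mathcal{D}$. A system of events is $\mathcal{B}=(B,\preceq)$ with $B\subseteq E$ and $\preceq$ a partial order on $B$ in which every event has only finitely many predecessors. It is an execution of $\mathcal{F}$, written $\mathcal{B}\in\mathrm{exec}(\mathcal{F})$, iff for every location $\ell$ the set $\{e\in B:\mathrm{sender}(\mathrm{chan}(e))=\ell \text{ or } \mathrm{recipient}(\mathrm{chan}(e))=\ell\}$ is linearly ordered by $\preceq$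 and, read in $\preceq$-order as the sequence of labels $(\mathrm{chan}(e),\mathrm{msg}(e))$, belongs to $\mathrm{traces}(\ell)$. For $C\subseteq\mathcal{CH}$, the restriction $\mathcal{B}|_C$ is $(\{e\in B:\mathrm{chan}(e)\in C\},\ \preceq$ restricted to that set$)$. A $C$-run is a system of events $\mathcal{A}|_C$ with $\mathcal{A}\in\mathrm{exec}(\mathcal{F})$. For $C,C'\subseteq\mathcal{CH}$ and a system of events $\mathcal{B}$, let $J_{C}^{C'}(\mathcal{B})=\{\mathcal{A}|_{C'}:\mathcal{A}\in\mathrm{exec}(\mathcal{F}),\ \mathcal{A}|_C=\mathcal{B}\}$ (the $C'$-runs compatible with $\mathcal{B}$). The undirected graph of $\mathcal{F}$ has vertices $\mathcal{LO}$; an undirected path is a sequence of locations $\ell_0,\dots,\ell_n$ together with channels $c_1,\dots,c_n$ where each $c_k$ has endpoints $\ell_{k-1},\ell_k$ in some direction; the path traverses the $c_k$. $C_{cut}$ is an undirected cut between $C_s$ and $C_o$ iff $C_s,C_{cut},C_o$ are pairwise disjoint and every undirected path from a location that is an endpoint of a channel in $C_o$ to a location that is an endpoint of a channel in $C_s$ traverses some channel in $C_{cut}$. A function $f$ on sets is a blur operator iff (i) $S\subseteq f(S)$ for all $S$; (ii) $f(f(S))=f(S)$ for all $S$; (iii) $f(\bigcup_{a\in I}S_a)=\bigcup_{a\in I}f(S_a)$ for every indexed family. A set $S$ is $f$-blurred iff $f$ is a blur operator and $f(S)=S$. $\mathcal{F}$ $f$-limits $C_s$-to-$C_o$ flow iff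 $f$ is a blur operator and for every $C_o$-run $\mathcal{B}_o$ the set $J_{C_o}^{C_s}(\mathcal{B}_o)$ is $f$-blurred. *)

(* Defs.v *)
(* Sets are predicates; equalities of sets / systems of
   events are Leibniz equalities (funext/propext are allowed in proofs). *)
From Stdlib Require Import List.
Import ListNotations.
Set Implicit Arguments.

Definition set (T : Type) := T -> Prop.

(* A frame is given by three types LO (locations), CH (channels), D (data)
   -- distinct types, hence pairwise disjoint -- together with
   ends : CH -> option (LO * LO)  (Some (sender, recipient) or None)
   traces : LO -> set trace. *)

Definition label (CH D : Type) := (CH * D)%type.

(* A finite or infinite sequence of labels: position n holds Some label,
   or None once the sequence has ended (see [is_seq]). *)
Definition trace (CH D : Type) := nat -> option (label CH D).

Definition is_seq (CH D : Type) (t : trace CH D) : Prop :=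
  forall n, t n = None -> t (S n) = None.

Definition at_loc (LO CH : Type) (ends : CH -> option (LO * LO)) (l : LO) (c : CH)
  : Prop :=
  exists m, ends c = Some (l, m) \/ ends c = Some (m, l).

Definition prefix (CH D : Type) (k : nat) (t : trace CH D) : trace CH D :=
  fun n => if Nat.ltb n k then t n else None.

Definition is_frame (LO CH D : Type) (ends : CH -> option (LO * LO))
  (traces : LO -> set (trace CH D)) : Prop :=
  (forall l t, traces l t -> is_seq t) /\
  (forall l t n c v, traces l t -> t n = Some (c, v) -> at_loc ends l c) /\
  (forall l t k, traces l t -> traces l (prefix k t)).

Definition sys (E : Type) := (set E * (E -> E -> Prop))%type.

Definition is_sys (E : Type) (Bs : sys E) : Prop :=
  let (B, le) := Bs in
  (forall x y, le x y -> B x /\ B y) /\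
  (forall x, B x -> le x x) /\
  (forall x y, le x y -> le y x -> x = y) /\
  (forall x y z, le x y -> le y z -> le x z) /\
  (forall e, B e -> exists l : list E, forall x, le x e -> In x l).

Definition rank (E : Type) (le : E -> E -> Prop) (S : set E) (e : E) (n : nat)
  : Prop :=
  exists l : list E, NoDup l /\ length l = n /\
    forall x, In x l <-> (S x /\ le x e /\ x <> e).

Definition reads (CH D E : Type) (chan : E -> CH) (msg : E -> D)
  (le : E -> E -> Prop) (S : set E) (t : trace CH D) : Prop :=
  forall n, match t n with
            | None => ~ (exists e, S e /\ rank le S e n)
            | Some lab => exists e, S e /\ rank le S e n /\ lab = (chan e, msg e)
            end.

Definition exec (LO CH D E : Type) (ends : CH -> option (LO * LO))
  (traces : LO -> set (trace CH D)) (chan : E -> CH) (msg : E -> D)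
  (A : sys E) : Prop :=
  is_sys A /\
  forall l : LO,
    let S := fun e => fst A e /\ at_loc ends l (chan e) in
    (forall x y, S x -> S y -> snd A x y \/ snd A y x) /\
    exists t, traces l t /\ reads chan msg (snd A) S t.

Definition restrict (CH E : Type) (chan : E -> CH) (C : set CH) (A : sys E)
  : sys E :=
  (fun e => fst A e /\ C (chan e),
   fun x y => snd A x y /\ C (chan x) /\ C (chan y)).

Definition is_run (LO CH D E : Type) (ends : CH -> option (LO * LO))
  (traces : LO -> set (trace CH D)) (chan : E -> CH) (msg : E -> D)
  (C : set CH) (X : sys E) : Prop :=
  exists A, exec ends traces chan msg A /\ X = restrict chan C A.

Definition J (LO CH D E : Type) (ends : CH -> option (LO * LO))
  (traces : LO -> set (trace CH D)) (chan : E -> CH) (msg : E -> D)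
  (C C' : set CH) (B : sys E) : set (sys E) :=
  fun X => exists A, exec ends traces chan msg A /\
             restrict chan C A = B /\ X = restrict chan C' A.

Definition connects (LO CH : Type) (ends : CH -> option (LO * LO))
  (c : CH) (l m : LO) : Prop :=
  ends c = Some (l, m) \/ ends c = Some (m, l).

Inductive upath (LO CH : Type) (ends : CH -> option (LO * LO))
  : LO -> LO -> list CH -> Prop :=
| upath_nil : forall l, upath ends l l []
| upath_cons : forall l m n c p,
    connects ends c l m -> upath ends m n p -> upath ends l n (c :: p).

Definition undirected_cut (LO CH : Type) (ends : CH -> option (LO * LO))
  (Cs Ccut Co : set CH) : Prop :=
  (forall c, ~ (Cs c /\ Ccut c)) /\
  (forall c, ~ (Cs c /\ Co c)) /\
  (forall c, ~ (Ccut c /\ Co c)) /\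
  (forall lo ls p co cs,
      Co co -> at_loc ends lo co -> Cs cs -> at_loc ends ls cs ->
      upath ends lo ls p -> exists c, In c p /\ Ccut c).

Definition subset (T : Type) (A B : set T) := forall x, A x -> B x.

Definition bigcup (T I : Type) (F : I -> set T) : set T :=
  fun x => exists a, F a x.

Definition blur_on (T : Type) (U : set T) (f : set T -> set T) : Prop :=
  (forall S, subset S U -> subset (f S) U) /\
  (forall S, subset S U -> subset S (f S)) /\
  (forall S, subset S U -> f (f S) = f S) /\
  (forall (I : Type) (F : I -> set T), (forall a, subset (F a) U) ->
      f (bigcup F) = bigcup (fun a => f (F a))).

Definition blurred (T : Type) (U : set T) (f : set T -> set T) (S : set T) :=
  blur_on U f /\ f S = S.

Definition f_limits (LO CH D E : Type) (ends : CH -> option (LO * LO))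
  (traces : LO -> set (trace CH D)) (chan : E -> CH) (msg : E -> D)
  (f : set (sys E) -> set (sys E)) (Cs Co : set CH) : Prop :=
  blur_on (is_run ends traces chan msg Cs) f /\
  forall Bo, is_run ends traces chan msg Co Bo ->
    blurred (is_run ends traces chan msg Cs) f (J ends traces chan msg Co Cs Bo).

(* Main.v *)
Require Import Defs.
From Stdlib Require Import List Classical FunctionalExtensionality PropExtensionality.
Import ListNotations.
Set Implicit Arguments.

Lemma rank_ext (E : Type) (le le' : E -> E -> Prop) (S S' : set E) e n :
  (forall e, S e <-> S' e) ->
  (forall x y, S x -> S y -> (le x y <-> le' x y)) ->
  S e -> rank le S e n -> rank le' S' e n.
Proof.
  intros HS Hle He [l [Hnd [Hlen Hin]]].
  exists l; split; [exact Hnd|split; [exact Hlen|]].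
  intros x; rewrite Hin; split.
  - intros [Sx [Hx Hne]]; split; [apply HS; exact Sx|split; [apply (Hle x e Sx He); exact Hx|exact Hne]].
  - intros [Sx [Hx Hne]]. assert (Sx' : S x) by (apply HS; exact Sx).
    split; [exact Sx'|split; [apply (Hle x e Sx' He); exact Hx|exact Hne]].
Qed.

Lemma reads_ext (CH D E : Type) (chan : E -> CH) (msg : E -> D)
  (le le' : E -> E -> Prop) (S S' : set E) t :
  (forall e, S e <-> S' e) ->
  (forall x y, S x -> S y -> (le x y <-> le' x y)) ->
  reads chan msg le S t -> reads chan msg le' S' t.
Proof.
  intros HS Hle Hr n. specialize (Hr n). destruct (t n) as [lab|].
  - destruct Hr as [e [Se [Hrk Hlab]]]. exists e.
    split; [apply HS; exact Se|split; [eapply rank_ext; eauto|exact Hlab]].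
  - intros [e [Se Hrk]]. apply Hr. exists e.
    assert (Se' : S e) by (apply HS; exact Se). split; [exact Se'|].
    eapply (@rank_ext E le' le S' S); try eassumption.
    + intros x; symmetry; apply HS.
    + intros x y Sx Sy; symmetry; apply Hle; apply HS; assumption.
Qed.

Definition Ls (LO CH : Type) (ends : CH -> option (LO * LO)) (Cs Ccut : set CH) (l : LO) :=
  exists ls cs p, Cs cs /\ at_loc ends ls cs /\ upath ends l ls p /\
    (forall c, In c p -> ~ Ccut c).

Definition sch (LO CH : Type) (ends : CH -> option (LO * LO)) (Cs Ccut : set CH) (c : CH) :=
  Cs c \/ exists m, Ls ends Cs Ccut m /\ at_loc ends m c.

Lemma Ls_ext (LO CH : Type) (ends : CH -> option (LO * LO)) (Cs Ccut : set CH) c l m :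
  connects ends c l m -> ~ Ccut c -> Ls ends Cs Ccut m -> Ls ends Cs Ccut l.
Proof.
  intros Hc Hn [ls [cs [p [H1 [H2 [H3 H4]]]]]].
  exists ls, cs, (c :: p). repeat split; try assumption.
  - econstructor; eassumption.
  - intros c' [<-|Hi]; [exact Hn|apply H4; exact Hi].
Qed.

Lemma Cs_Ls (LO CH : Type) (ends : CH -> option (LO * LO)) (Cs Ccut : set CH) c l :
  Cs c -> at_loc ends l c -> Ls ends Cs Ccut l.
Proof.
  intros H1 H2. exists l, c, []. repeat split; try assumption.
  - constructor.
  - intros c' [].
Qed.

Lemma Co_not_sch (LO CH : Type) (ends : CH -> option (LO * LO)) (Cs Ccut Co : set CH) c :
  undirected_cut ends Cs Ccut Co -> Co c -> ~ sch ends Cs Ccut c.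
Proof.
  intros [H1 [H2 [H3 H4]]] Hc [Hs|[m [[ls [cs [p [K1 [K2 [K3 K4]]]]]] Hm]]].
  - apply (H2 c); split; assumption.
  - destruct (H4 m ls p c cs Hc Hm K1 K2 K3) as [c' [Hi Hcc]].
    exact (K4 c' Hi Hcc).
Qed.

Lemma loc_nonLs (LO CH : Type) (ends : CH -> option (LO * LO)) (Cs Ccut : set CH) l c :
  ~ Ls ends Cs Ccut l -> at_loc ends l c -> sch ends Cs Ccut c -> Ccut c.
Proof.
  intros Hn Hl [Hs|[m [Hm Hmc]]].
  - exfalso; apply Hn; eapply Cs_Ls; eassumption.
  - destruct (classic (Ccut c)) as [Hc|Hc]; [exact Hc|exfalso].
    destruct Hl as [m' Hl]; destruct Hmc as [x Hmc].
    destruct Hl as [Hl|Hl]; destruct Hmc as [Hmc|Hmc]; rewrite Hl in Hmc;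
      inversion Hmc; subst;
      try first [ apply Hn; exact Hm
            | apply Hn; exact (@Ls_ext _ _ ends Cs Ccut c _ _ (or_introl Hl) Hc Hm)
            | apply Hn; exact (@Ls_ext _ _ ends Cs Ccut c _ _ (or_intror Hl) Hc Hm) ].

Qed.

Lemma cover_list (E : Type) (P : E -> E -> Prop) (l : list E) (Q : E -> Prop) :
  (forall c, Q c -> exists l', forall x, P x c -> In x l') ->
  exists L, forall c x, In c l -> Q c -> P x c -> In x L.
Proof.
  intros H. induction l as [|a l IH].
  - exists []. intros c x [].
  - destruct IH as [L HL]. destruct (classic (Q a)) as [Ha|Ha].
    + destruct (H a Ha) as [l' Hl']. exists (l' ++ L).
      intros c x [<-|Hi] Hq Hp; apply in_or_app; [left; apply Hl'; exact Hp|right; eapply HL; eauto].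
    + exists L. intros c x [<-|Hi] Hq Hp; [contradiction|eapply HL; eauto].
Qed.

Lemma glue (LO CH D E : Type) (ends : CH -> option (LO * LO))
  (traces : LO -> set (trace CH D)) (chan : E -> CH) (msg : E -> D)
  (Cs Ccut Co : set CH) (Hcut : undirected_cut ends Cs Ccut Co) (A1 A2 : sys E) :
  exec ends traces chan msg A1 -> exec ends traces chan msg A2 ->
  restrict chan Ccut A1 = restrict chan Ccut A2 ->
  exists A, exec ends traces chan msg A /\ restrict chan Co A = restrict chan Co A1
    /\ restrict chan Cs A = restrict chan Cs A2.
Proof.
  destruct A1 as [B1 le1], A2 as [B2 le2].
  intros [Hs1 Hl1] [Hs2 Hl2] Hres.
  simpl in Hs1, Hs2.
  destruct Hs1 as (Hb1 & Hr1 & Ha1 & Ht1 & Hf1).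
  destruct Hs2 as (Hb2 & Hr2 & Ha2 & Ht2 & Hf2).
  unfold restrict in Hres; simpl in Hres.
  assert (Fc : forall c, Ccut (chan c) -> (B1 c <-> B2 c)).
  { intros c Hc. pose proof (f_equal fst Hres) as H; simpl in H.
    pose proof (equal_f H c) as H'; simpl in H'. split; intros Hx.
    - assert (B1 c /\ Ccut (chan c)) as K by auto. rewrite H' in K. apply K.
    - assert (B2 c /\ Ccut (chan c)) as K by auto. rewrite <- H' in K. apply K. }
  assert (Fl : forall c d, Ccut (chan c) -> Ccut (chan d) -> (le1 c d <-> le2 c d)).
  { intros c d Hc Hd. pose proof (f_equal snd Hres) as H; simpl in H.
    pose proof (equal_f (equal_f H c) d) as H'; simpl in H'. split; intros Hx.
    - assert (le1 c d /\ Ccut (chan c) /\ Ccut (chan d)) as K by auto. rewrite H' in K. apply K.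
    - assert (le2 c d /\ Ccut (chan c) /\ Ccut (chan d)) as K by auto. rewrite <- H' in K. apply K. }
  set (sc := sch ends Cs Ccut).
  set (X1 := fun e => B1 e /\ (~ sc (chan e) \/ Ccut (chan e))).
  set (X2 := fun e => B2 e /\ (sc (chan e) \/ Ccut (chan e))).
  set (p1 := fun x y => X1 x /\ X1 y /\ le1 x y).
  set (p2 := fun x y => X2 x /\ X2 y /\ le2 x y).
  set (le := fun x y => p2 x y \/ p1 x y \/
        (exists c, Ccut (chan c) /\ p2 x c /\ p1 c y) \/
        (exists c, Ccut (chan c) /\ p1 x c /\ p2 c y)).
  set (B := fun e => X1 e \/ X2 e).
  assert (X12 : forall e, X1 e -> X2 e -> Ccut (chan e)).
  { intros e [_ [H|H]] [_ [K|K]]; tauto. }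
  assert (Xc : forall e, Ccut (chan e) -> (X1 e <-> X2 e)).
  { intros e Hc; unfold X1, X2; rewrite (Fc e Hc); tauto. }
  assert (pc : forall c d, Ccut (chan c) -> Ccut (chan d) -> (p1 c d <-> p2 c d)).
  { intros c d Hc Hd; unfold p1, p2; rewrite (Xc c Hc), (Xc d Hd), (Fl c d Hc Hd); tauto. }
  assert (P2 : forall x y, le x y -> X2 x -> X2 y -> p2 x y).
  { intros x y [H|[H|[[c [Hc [H H']]]|[c [Hc [H H']]]]]] Hx Hy.
    - exact H.
    - pose proof H as [Hx1 [Hy1 _]]. apply (pc x y); [apply X12|apply X12|]; auto.
    - pose proof H' as [_ [Hy1 _]]. assert (Hyc := X12 y Hy1 Hy).
      apply pc in H'; auto. destruct H as [? [_ H]], H' as [_ [? H']].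
      split; [auto|split; [auto|eapply Ht2; eauto]].
    - pose proof H as [Hx1 [_ _]]. assert (Hxc := X12 x Hx1 Hx).
      apply pc in H; auto. destruct H as [? [_ H]], H' as [_ [? H']].
      split; [auto|split; [auto|eapply Ht2; eauto]]. }
  assert (P1 : forall x y, le x y -> X1 x -> X1 y -> p1 x y).
  { intros x y [H|[H|[[c [Hc [H H']]]|[c [Hc [H H']]]]]] Hx Hy.
    - pose proof H as [Hx2 [Hy2 _]]. apply (pc x y); [apply X12|apply X12|]; auto.
    - exact H.
    - pose proof H as [Hx2 [_ _]]. assert (Hxc := X12 x Hx Hx2).
      apply pc in H; auto. destruct H as [? [_ H]], H' as [_ [? H']].
      split; [auto|split; [auto|eapply Ht1; eauto]].
    - pose proof H' as [_ [Hy2 _]]. assert (Hyc := X12 y Hy Hy2).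
      apply pc in H'; auto. destruct H as [? [_ H]], H' as [_ [? H']].
      split; [auto|split; [auto|eapply Ht1; eauto]]. }
  assert (Lstep : forall x y z, le x y -> (p1 y z \/ p2 y z) -> le x z).
  { intros x y z Hxy [Hyz|Hyz].
    - destruct Hxy as [H|[H|[[c [Hc [H H']]]|[c [Hc [H H']]]]]].
      + right; right; left. exists y. split; [|split; auto].
        apply X12; [apply Hyz|apply H].
      + right; left. destruct H as [? [_ H]], Hyz as [_ [? Hyz]].
        split; [auto|split; [auto|eapply Ht1; eauto]].
      + right; right; left. exists c. split; [auto|split; [auto|]].
        destruct H' as [? [_ H']], Hyz as [_ [? Hyz]].
        split; [auto|split; [auto|eapply Ht1; eauto]].
      + assert (Hyc : Ccut (chan y)) by (apply X12; [apply Hyz|apply H']).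
        apply pc in H'; auto.
        right; left. destruct H as [? [_ H]], H' as [_ [_ H']], Hyz as [_ [? Hyz]].
        split; [auto|split; [auto|]]. eapply Ht1; [eauto|eapply Ht1; eauto].
    - destruct Hxy as [H|[H|[[c [Hc [H H']]]|[c [Hc [H H']]]]]].
      + left. destruct H as [? [_ H]], Hyz as [_ [? Hyz]].
        split; [auto|split; [auto|eapply Ht2; eauto]].
      + right; right; right. exists y. split; [|split; auto].
        apply X12; [apply H|apply Hyz].
      + assert (Hyc : Ccut (chan y)) by (apply X12; [apply H'|apply Hyz]).
        apply pc in H'; auto.
        left. destruct H as [? [_ H]], H' as [_ [_ H']], Hyz as [_ [? Hyz]].
        split; [auto|split; [auto|]]. eapply Ht2; [eauto|eapply Ht2; eauto].
      + right; right; right. exists c. split; [auto|split; [auto|]].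
        destruct H' as [? [_ H']], Hyz as [_ [? Hyz]].
        split; [auto|split; [auto|eapply Ht2; eauto]]. }
  assert (Ltrans : forall x y z, le x y -> le y z -> le x z).
  { intros x y z Hxy [H|[H|[[c [Hc [H H']]]|[c [Hc [H H']]]]]].
    - eapply Lstep; eauto.
    - eapply Lstep; eauto.
    - eapply Lstep; [eapply Lstep; [exact Hxy|right; exact H]|left; exact H'].
    - eapply Lstep; [eapply Lstep; [exact Hxy|left; exact H]|right; exact H']. }
  assert (LB : forall x y, le x y -> B x /\ B y).
  { intros x y [H|[H|[[c [Hc [H H']]]|[c [Hc [H H']]]]]]; unfold B;
      try (destruct H as [? [? _]]; tauto).
    - destruct H as [? _], H' as [_ [? _]]; tauto.
    - destruct H as [? _], H' as [_ [? _]]; tauto. }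
  assert (Lanti0 : forall x y, le x y -> le y x -> X2 x -> ~ X1 x -> X1 y -> ~ X2 y -> False).
  { intros x y Hxy Hyx Hx2 Hx1 Hy1 Hy2.
    destruct Hxy as [H|[H|[[c [Hc [H H']]]|[c [Hc [H H']]]]]];
      try (destruct H as [? [? _]]; tauto).
    destruct Hyx as [K|[K|[[d [Hd [K K']]]|[d [Hd [K K']]]]]];
      try (destruct K as [? [? _]]; tauto).
    assert (Hcd : p1 c d).
    { destruct H' as [? [_ H']], K as [_ [? K]]. split; [auto|split; [auto|eapply Ht1; eauto]]. }
    apply pc in Hcd; auto.
    assert (Hxd : le2 x d) by (destruct H as [_ [_ H]], Hcd as [_ [_ Hcd]]; eapply Ht2; eauto).
    assert (x = d) by (apply Ha2; [exact Hxd|apply K']).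
    subst d. apply Hx1. apply K. }
  assert (Lanti : forall x y, le x y -> le y x -> x = y).
  { intros x y Hxy Hyx.
    destruct (classic (X2 x /\ X2 y)) as [[Hx Hy]|N2].
    { apply Ha2; [apply (P2 x y)|apply (P2 y x)]; auto. }
    destruct (classic (X1 x /\ X1 y)) as [[Hx Hy]|N1].
    { apply Ha1; [apply (P1 x y)|apply (P1 y x)]; auto. }
    destruct (LB x y Hxy) as [Bx By]. exfalso.
    destruct Bx as [Bx|Bx], By as [By|By]; try tauto.
    - eapply (Lanti0 y x); eauto; intro; apply N1 || apply N2; auto.
    - eapply (Lanti0 x y); eauto; intro; apply N1 || apply N2; auto. }
  exists (B, le).
  split; [split|split].
  - simpl. split; [exact LB|split; [|split; [exact Lanti|split; [exact Ltrans|]]]].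
    + intros x [Hx|Hx]; [right; left|left]; repeat split; try apply Hx;
        [apply Hr1|apply Hr2]; apply Hx.
    + intros e _.
      assert (G1 : exists l1, B1 e -> forall x, le1 x e -> In x l1).
      { destruct (classic (B1 e)) as [H|H]; [destruct (Hf1 e H) as [l1 ?]; exists l1; auto|exists []; tauto]. }
      assert (G2 : exists l2, B2 e -> forall x, le2 x e -> In x l2).
      { destruct (classic (B2 e)) as [H|H]; [destruct (Hf2 e H) as [l2 ?]; exists l2; auto|exists []; tauto]. }
      destruct G1 as [l1 G1], G2 as [l2 G2].
      destruct (@cover_list E le2 l1 B2 Hf2) as [L1 HL1].
      destruct (@cover_list E le1 l2 B1 Hf1) as [L2 HL2].
      exists (l1 ++ l2 ++ L1 ++ L2). intros x Hx.
      rewrite !in_app_iff.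
      destruct Hx as [H|[H|[[c [Hc [H H']]]|[c [Hc [H H']]]]]].
      * right; left. apply G2; apply H.
      * left. apply G1; apply H.
      * right; right; left. destruct H as [_ [[Hc2 _] H]], H' as [_ [[? _] H']].
        eapply HL1; eauto.
      * right; right; right. destruct H as [_ [[Hc1 _] H]], H' as [_ [[? _] H']].
        eapply HL2; eauto.
  - intros l. simpl.
    destruct (classic (Ls ends Cs Ccut l)) as [HL|HL].
    + assert (Sc : forall e, at_loc ends l (chan e) -> sc (chan e)) by
        (intros e He; right; exists l; auto).
      assert (SB : forall e, at_loc ends l (chan e) -> (B e <-> B2 e)).
      { intros e He. pose proof (Sc e He). unfold B, X1, X2. split; [|tauto].
        intros [[H1 [H2|H2]]|[H1 _]]; [tauto| |auto]. apply Fc; auto. }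
      assert (SX : forall e, at_loc ends l (chan e) -> B e -> X2 e).
      { intros e He Hb. split; [apply (proj1 (SB e He) Hb)|left; apply Sc; auto]. }
      destruct (Hl2 l) as [Hlin [t [Ht Hrd]]]. simpl in Hlin, Hrd.
      assert (Sle : forall x y, (B x /\ at_loc ends l (chan x)) ->
                 (B y /\ at_loc ends l (chan y)) -> (le2 x y <-> le x y)).
      { intros x y [Bx Lx] [By Ly]. split.
        - intro H. left. split; [auto|split; [auto|exact H]].
        - intro H. apply (P2 x y H); auto. }
      split.
      * intros x y [Bx Lx] [By Ly].
        destruct (Hlin x y) as [H|H]; [split; [apply SB|]; auto|split; [apply SB|]; auto| |].
        -- left. apply (Sle x y); auto.
        -- right. apply (Sle y x); auto.
      * exists t. split; [exact Ht|].
        eapply reads_ext; [| |exact Hrd].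
        -- intros e. split; intros [H1 H2]; split; auto; apply (SB e H2); auto.
        -- intros x y [Bx Lx] [By Ly]. apply Sle; split; auto; apply SB; auto.
    + assert (Sc : forall e, at_loc ends l (chan e) -> sc (chan e) -> Ccut (chan e)) by
        (intros e He Hs; eapply loc_nonLs; eauto).
      assert (SB : forall e, at_loc ends l (chan e) -> (B e <-> B1 e)).
      { intros e He. pose proof (Sc e He). unfold B, X1, X2. split.
        - intros [[H1 _]|[H1 [H2|H2]]]; auto; apply Fc; auto.
        - intros Hb. left. split; auto. destruct (classic (sc (chan e))); auto. }
      assert (SX : forall e, at_loc ends l (chan e) -> B e -> X1 e).
      { intros e He Hb. split; [apply (proj1 (SB e He) Hb)|].
        destruct (classic (sc (chan e))); auto. }
      destruct (Hl1 l) as [Hlin [t [Ht Hrd]]]. simpl in Hlin, Hrd.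
      assert (Sle : forall x y, (B x /\ at_loc ends l (chan x)) ->
                 (B y /\ at_loc ends l (chan y)) -> (le1 x y <-> le x y)).
      { intros x y [Bx Lx] [By Ly]. split.
        - intro H. right; left. split; [auto|split; [auto|exact H]].
        - intro H. apply (P1 x y H); auto. }
      split.
      * intros x y [Bx Lx] [By Ly].
        destruct (Hlin x y) as [H|H]; [split; [apply SB|]; auto|split; [apply SB|]; auto| |].
        -- left. apply (Sle x y); auto.
        -- right. apply (Sle y x); auto.
      * exists t. split; [exact Ht|].
        eapply reads_ext; [| |exact Hrd].
        -- intros e. split; intros [H1 H2]; split; auto; apply (SB e H2); auto.
        -- intros x y [Bx Lx] [By Ly]. apply Sle; split; auto; apply SB; auto.
  - pose proof Hcut as [D1 [D2 [D3 _]]].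
    assert (N : forall e, Co (chan e) -> ~ sc (chan e) /\ ~ Ccut (chan e)).
    { intros e He. split; [eapply Co_not_sch; eauto|intro Hc; exact (D3 (chan e) (conj Hc He))].  }
    assert (NB : forall e, Co (chan e) -> (B e <-> X1 e)).
    { intros e He; destruct (N e He); unfold B, X2; split; [intros [Hq|[_ Hq]]; tauto|tauto]. }
    unfold restrict; simpl. f_equal.
    + apply functional_extensionality; intro e; apply propositional_extensionality.
      split; intros [H1 H2]; split; auto.
      * apply (NB e H2) in H1. apply H1.
      * apply NB; auto. split; auto. left; apply N; auto.
    + apply functional_extensionality; intro x; apply functional_extensionality; intro y;
        apply propositional_extensionality.
      split; intros [H1 [H2 H3]]; split; auto.
      * destruct (LB x y H1) as [Bx By]. apply (P1 x y H1); apply NB; auto.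
      * right; left. destruct (Hb1 x y H1). split; [|split; [|auto]]; split; auto; left; apply N; auto.
  - pose proof Hcut as [D1 [D2 [D3 _]]].
    assert (N : forall e, Cs (chan e) -> sc (chan e) /\ ~ Ccut (chan e)).
    { intros e He. split; [left; auto|intro Hc; exact (D1 (chan e) (conj He Hc))]. }
    assert (NB : forall e, Cs (chan e) -> (B e <-> X2 e)).
    { intros e He; destruct (N e He); unfold B, X1; split; [intros [[_ Hq]|Hq]; tauto|tauto]. }
    unfold restrict; simpl. f_equal.
    + apply functional_extensionality; intro e; apply propositional_extensionality.
      split; intros [H1 H2]; split; auto.
      * apply (NB e H2) in H1. apply H1.
      * apply NB; auto. split; auto. left; apply N; auto.
    + apply functional_extensionality; intro x; apply functional_extensionality; intro y;
        apply propositional_extensionality.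
      split; intros [H1 [H2 H3]]; split; auto.
      * destruct (LB x y H1) as [Bx By]. apply (P2 x y H1); apply NB; auto.
      * left. destruct (Hb2 x y H1). split; [|split; [|auto]]; split; auto; left; apply N; auto.
Qed.

Theorem theorem2 (LO CH D : Type) (ends : CH -> option (LO * LO))
  (traces : LO -> set (trace CH D)) (Hframe : is_frame ends traces)
  (E : Type) (chan : E -> CH) (msg : E -> D)
  (Cs Ccut Co : set CH) (f : set (sys E) -> set (sys E)) :
  undirected_cut ends Cs Ccut Co ->
  f_limits ends traces chan msg f Cs Ccut ->
  f_limits ends traces chan msg f Cs Co.
Proof.
  intros Hcut [Hblur Hlim]. split; [exact Hblur|]. intros Bo HBo. split; [exact Hblur|].
  set (I := {Bc : sys E | J ends traces chan msg Co Ccut Bo Bc}).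
  set (F := fun i : I => J ends traces chan msg Ccut Cs (proj1_sig i)).
  assert (HF : forall a, subset (F a) (is_run ends traces chan msg Cs)).
  { intros [Bc HBc] X [A [HA [_ HX]]]. exists A; split; auto. }
  assert (Heq : J ends traces chan msg Co Cs Bo = bigcup F).
  { apply functional_extensionality; intro X; apply propositional_extensionality. split.
    - intros [A [HA [HAo HX]]].
      assert (Hi : J ends traces chan msg Co Ccut Bo (restrict chan Ccut A)).
      { exists A; auto. }
      exists (exist _ _ Hi). exists A; simpl; auto.
    - intros [[Bc [A1 [HA1 [HA1o HBc]]]] [A2 [HA2 [HA2c HX]]]]. simpl in HA2c.
      subst Bc. destruct (glue Hcut HA1 HA2 (eq_sym HA2c)) as [A [HA [Ho Hs]]].
      exists A. split; [exact HA|split; [rewrite Ho; exact HA1o|rewrite Hs; exact HX]]. }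
  rewrite Heq. destruct Hblur as [_ [_ [_ Hu]]]. rewrite (Hu I F HF).
  unfold bigcup. apply functional_extensionality; intro X; apply propositional_extensionality.
  assert (Hfa : forall a, f (F a) = F a).
  { intros [Bc HBc]. unfold F; simpl. destruct HBc as [A [HA [_ HBc]]]. apply (Hlim Bc). exists A; split; auto. }
  split; intros [a Ha]; exists a; [rewrite <- (Hfa a)|rewrite (Hfa a)]; exact Ha.
Qed.
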